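(* Let $(X,d)$ be a metric space. There exists $\alpha\in(0,1)$ such that $(X,d^\alpha)$ admits an isometric embedding into some finite-dimensional normed linear space if and only if $X$ is finite.
   Context: For a metric space $(X,d)$ and $\alpha\in(0,1)$, $d^\alpha$ denotes the metric $(x,y)\mapsto d(x,y)^\alpha$. *)

(* Defs.v *)
From Stdlib Require Import Reals List.
Open Scope R_scope.

Definition is_metric {X : Type} (d : X -> X -> R) : Prop :=
  (forall x y, 0 <= d x y) /\
  (forall x y, d x y = 0 <-> x = y) /\
  (forall x y, d x y = d y x) /\
  (forall x y z, d x z <= d x y + d y z).

(* t^a for t >= 0, with the convention 0^a = 0 (a > 0).
   (Stdlib's Rpower 0 a = 1, so the case t = 0 is handled separately.) *)
Definition rpow_nonneg (t a : R) : R :=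
  match Rle_dec t 0 with
  | left _ => 0
  | right _ => Rpower t a
  end.

Record NormedSpace : Type := {
  ns_car :> Type;
  ns_add : ns_car -> ns_car -> ns_car;
  ns_zero : ns_car;
  ns_opp : ns_car -> ns_car;
  ns_scal : R -> ns_car -> ns_car;
  ns_norm : ns_car -> R;
  ns_add_assoc : forall u v w, ns_add u (ns_add v w) = ns_add (ns_add u v) w;
  ns_add_comm : forall u v, ns_add u v = ns_add v u;
  ns_add_zero : forall u, ns_add u ns_zero = u;
  ns_add_opp : forall u, ns_add u (ns_opp u) = ns_zero;
  ns_scal_one : forall u, ns_scal 1 u = u;
  ns_scal_assoc : forall a b u, ns_scal a (ns_scal b u) = ns_scal (a * b) u;
  ns_scal_distr_l : forall a u v, ns_scal a (ns_add u v) = ns_add (ns_scal a u) (ns_scal a v);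
  ns_scal_distr_r : forall a b u, ns_scal (a + b) u = ns_add (ns_scal a u) (ns_scal b u);
  ns_norm_eq0 : forall u, ns_norm u = 0 -> u = ns_zero;
  ns_norm_scal : forall a u, ns_norm (ns_scal a u) = Rabs a * ns_norm u;
  ns_norm_triangle : forall u v, ns_norm (ns_add u v) <= ns_norm u + ns_norm v
}.

Fixpoint lincomb (N : NormedSpace) (cs : list R) (l : list N) : N :=
  match cs, l with
  | a :: cs', x :: l' => ns_add N (ns_scal N a x) (lincomb N cs' l')
  | _, _ => ns_zero N
  end.

Definition finite_dimensional (N : NormedSpace) : Prop :=
  exists l : list N, forall v : N, exists cs : list R, v = lincomb N cs l.

Definition finite_type (X : Type) : Prop :=
  exists l : list X, forall x : X, In x l.

(* Main.v *)
Require Import Defs.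
From Stdlib Require Import Reals List Lra Lia ZArith Classical ClassicalEpsilon FunctionalExtensionality.
Open Scope R_scope.

Lemma rpow_half (t : R) : 0 <= t -> rpow_nonneg t (/2) = sqrt t.
Proof.
  intro Ht. unfold rpow_nonneg. destruct (Rle_dec t 0).
  - assert (t = 0) by lra. subst. now rewrite sqrt_0.
  - apply Rpower_sqrt. lra.
Qed.

Section Linf.
Variable X : Type.
Variable l : list X.

Definition supn (u : X -> R) : R := fold_right (fun z m => Rmax (Rabs (u z)) m) 0 l.

Lemma supn_ge0 u : 0 <= supn u.
Proof. unfold supn. induction l; simpl. lra. eapply Rle_trans; [exact IHl0| apply Rmax_r]. Qed.

Lemma supn_ge u z : In z l -> Rabs (u z) <= supn u.
Proof. unfold supn. induction l as [|a l' IH]; simpl; [tauto|]. intros [->|H].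
  apply Rmax_l. eapply Rle_trans; [apply IH; exact H| apply Rmax_r]. Qed.

Lemma supn_le u M : 0 <= M -> (forall z, In z l -> Rabs (u z) <= M) -> supn u <= M.
Proof. unfold supn. induction l as [|a l' IH]; simpl; intros H0 H. lra.
  apply Rmax_lub. apply H; auto. apply IH; auto. Qed.

Lemma supn_scal a u : supn (fun z => a * u z) = Rabs a * supn u.
Proof. unfold supn. induction l as [|b l' IH]; simpl. ring.
    rewrite IH, Rabs_mult. now rewrite RmaxRmult by apply Rabs_pos. Qed.
Hypothesis Hl : forall x : X, In x l.
Definition Linf : NormedSpace.
Proof.
  refine {| ns_car := X -> R;
            ns_add := fun u v z => u z + v z;
            ns_zero := fun _ => 0;
            ns_opp := fun u z => - u z;
            ns_scal := fun a u z => a * u z;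
            ns_norm := supn |}.
  - intros; apply functional_extensionality; intro; ring.
  - intros; apply functional_extensionality; intro; ring.
  - intros; apply functional_extensionality; intro; ring.
  - intros; apply functional_extensionality; intro; ring.
  - intros; apply functional_extensionality; intro; ring.
  - intros; apply functional_extensionality; intro; ring.
  - intros; apply functional_extensionality; intro; ring.
  - intros; apply functional_extensionality; intro; ring.
  - intros u H; apply functional_extensionality; intro z.
    pose proof (supn_ge u z (Hl z)). pose proof (Rabs_pos (u z)).
    assert (Rabs (u z) = 0) by lra. destruct (Req_dec (u z) 0); auto; apply Rabs_no_R0 in H3; contradiction.
  - intros a u. apply supn_scal.
  - intros u v. apply supn_le. pose proof (supn_ge0 u); pose proof (supn_ge0 v); lra.
    intros z Hz. eapply Rle_trans. apply Rabs_triang.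
    pose proof (supn_ge u z Hz); pose proof (supn_ge v z Hz); lra.
Defined.

Definition ind (eqd : forall x y : X, {x = y} + {x <> y}) (z : X) : Linf :=
  fun y => if eqd z y then 1 else 0.

Lemma lincomb_step c cs (x : Linf) xs y : lincomb Linf (c::cs) (x::xs) y = c * x y + lincomb Linf cs xs y.
Proof. reflexivity. Qed.

Lemma lincomb_out eqd (v : X -> R) (l' : list X) y :
  ~ In y l' -> lincomb Linf (map v l') (map (ind eqd) l') y = 0.
Proof. induction l' as [|a l' IH]; intros H. reflexivity.
  simpl map; rewrite lincomb_step. simpl in H. unfold ind at 1. destruct (eqd a y). subst; tauto. assert (E := IH ltac:(tauto)). simpl in E |- *. rewrite E. ring. Qed.

Lemma lincomb_in eqd (v : X -> R) (l' : list X) y :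
  NoDup l' -> In y l' -> lincomb Linf (map v l') (map (ind eqd) l') y = v y.
Proof. induction l' as [|a l' IH]; intros Hn H. simpl in H; tauto.
  simpl map; rewrite lincomb_step. simpl in H.
  inversion Hn; subst. unfold ind at 1. destruct (eqd a y).
  - subst. assert (E := lincomb_out eqd v l' y H2). simpl in E |- *. rewrite E. ring.
  - destruct H as [->|H]. tauto. assert (E := IH H3 H). simpl in E |- *. rewrite E. ring. Qed.

Lemma Linf_fd : finite_dimensional Linf.
Proof.
  pose (eqd := fun x y : X => excluded_middle_informative (x = y)).
  exists (map (ind eqd) (nodup eqd l)). intro v. exists (map v (nodup eqd l)).
  apply functional_extensionality; intro y. symmetry. apply lincomb_in.
  apply NoDup_nodup. apply nodup_In. apply Hl.
Qed.
End Linf.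

Lemma sqrt_sub_le a b : 0 <= a -> 0 <= b -> sqrt (a + b) <= sqrt a + sqrt b.
Proof. intros. apply Rsqr_incr_0_var. rewrite Rsqr_sqrt by lra.
  unfold Rsqr. pose proof (sqrt_sqrt a H); pose proof (sqrt_sqrt b H0).
  pose proof (sqrt_pos a); pose proof (sqrt_pos b). nra.
  pose proof (sqrt_pos a); pose proof (sqrt_pos b). lra. Qed.

Lemma finite_embeds (X : Type) (d : X -> X -> R) (hd : is_metric d) :
  finite_type X ->
  (exists (alpha : R), 0 < alpha < 1 /\
     exists (N : NormedSpace), finite_dimensional N /\
       exists f : X -> N,
         forall x y : X,
           ns_norm N (ns_add N (f x) (ns_opp N (f y))) = rpow_nonneg (d x y) alpha).
Proof.
  intros [l Hl]. destruct hd as (H0 & H1 & H2 & H3).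
  set (r := fun x y => sqrt (d x y)).
  assert (Htri : forall x y z, r x z <= r x y + r y z).
  { intros. unfold r. eapply Rle_trans. apply sqrt_le_1_alt. apply H3.
    apply sqrt_sub_le; auto. }
  assert (Hsym : forall x y, r x y = r y x). { intros; unfold r; now rewrite H2. }
  assert (Hz : forall x, r x x = 0). { intros; unfold r. rewrite (proj2 (H1 x x) eq_refl). apply sqrt_0. }
  exists (/2). split. lra. exists (Linf X l Hl). split. apply Linf_fd.
  exists (fun x z => r x z). intros x y. rewrite rpow_half by auto.
  change (sqrt (d x y)) with (r x y). simpl.
  apply Rle_antisym.
  - apply supn_le. apply sqrt_pos. intros z _. apply Rabs_le.
    pose proof (Htri x y z); pose proof (Htri y x z); rewrite (Hsym y x) in H4. lra.
  - eapply Rle_trans; [|apply (supn_ge X l _ y (Hl y))]. simpl. rewrite Hz.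
    rewrite Ropp_0, Rplus_0_r. apply RRle_abs.
Qed.

Fixpoint hs (g : nat -> R) (n : nat) : R :=
  match n with O => 0 | S m => g O + hs (fun i => g (S i)) m end.

Lemma hs_ext g g' n : (forall i, (i < n)%nat -> g i = g' i) -> hs g n = hs g' n.
Proof. revert g g'; induction n; intros g g' H; simpl. auto.
  rewrite (H O) by lia. f_equal. apply IHn. intros; apply H; lia. Qed.

Lemma hs_le g g' n : (forall i, (i < n)%nat -> g i <= g' i) -> hs g n <= hs g' n.
Proof. revert g g'; induction n; intros g g' H; simpl. lra.
  pose proof (H O ltac:(lia)). pose proof (IHn (fun i => g (S i)) (fun i => g' (S i)) ltac:(intros; apply H; lia)). lra. Qed.

Lemma hs_plus g g' n : hs (fun i => g i + g' i) n = hs g n + hs g' n.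
Proof. revert g g'; induction n; intros; simpl. lra. rewrite IHn. lra. Qed.

Lemma hs_scal a g n : hs (fun i => a * g i) n = a * hs g n.
Proof. revert g; induction n; intros; simpl. lra. rewrite IHn. lra. Qed.

Lemma hs_ge0 g n : (forall i, (i < n)%nat -> 0 <= g i) -> 0 <= hs g n.
Proof. intro H. replace 0 with (hs (fun _ => 0) n). apply hs_le; auto.
  clear H; induction n; simpl; auto. rewrite IHn; lra. Qed.

Lemma hs_term g n i : (forall i, (i < n)%nat -> 0 <= g i) -> (i < n)%nat -> g i <= hs g n.
Proof. revert g i; induction n; intros g i H Hi. lia. simpl. destruct i.
  pose proof (hs_ge0 (fun i => g (S i)) n ltac:(intros; apply H; lia)). lra.
  pose proof (IHn (fun i => g (S i)) i ltac:(intros; apply H; lia) ltac:(lia)). simpl in H0.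
  pose proof (H O ltac:(lia)). lra. Qed.

Section NS.
Variable N : NormedSpace.
Notation add := (ns_add N). Notation scal := (ns_scal N). Notation zero := (ns_zero N).
Notation opp := (ns_opp N). Notation norm := (ns_norm N).

Lemma add_zero_l u : add zero u = u.
Proof. rewrite ns_add_comm. apply ns_add_zero. Qed.

Lemma add_cancel_l u v w : add w u = add w v -> u = v.
Proof. intro H. rewrite <- (add_zero_l u), <- (add_zero_l v).
  rewrite <- (ns_add_opp N w), (ns_add_comm N w). rewrite <- !ns_add_assoc, H. reflexivity. Qed.

Lemma scal_zero_l u : scal 0 u = zero.
Proof. apply (add_cancel_l _ _ (scal 0 u)). rewrite ns_add_zero, <- ns_scal_distr_r.
  now rewrite Rplus_0_r. Qed.

Lemma scal_zero_r a : scal a zero = zero.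
Proof. apply (add_cancel_l _ _ (scal a zero)). rewrite ns_add_zero, <- ns_scal_distr_l.
  now rewrite ns_add_zero. Qed.

Lemma opp_scal u : opp u = scal (-1) u.
Proof. apply (add_cancel_l _ _ u). rewrite ns_add_opp.
  rewrite <- (ns_scal_one N u) at 1. rewrite <- ns_scal_distr_r.
  replace (1 + -1) with 0 by ring. now rewrite scal_zero_l. Qed.

Lemma norm_zero : norm zero = 0.
Proof. rewrite <- (scal_zero_l zero), ns_norm_scal, Rabs_R0. ring. Qed.

Lemma norm_nonneg u : 0 <= norm u.
Proof. pose proof (ns_norm_triangle N u (opp u)). rewrite ns_add_opp, norm_zero, opp_scal, ns_norm_scal in H.
  rewrite Rabs_left in H by lra. lra. Qed.

Lemma add_swap4 a b c d : add (add a b) (add c d) = add (add a c) (add b d).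
Proof. rewrite <- !ns_add_assoc. f_equal. rewrite !ns_add_assoc. f_equal. apply ns_add_comm. Qed.

Fixpoint lc (e : nat -> N) (c : nat -> R) (n : nat) : N :=
  match n with O => zero | S m => add (scal (c O) (e O)) (lc (fun i => e (S i)) (fun i => c (S i)) m) end.

Lemma lc_ext e e' c c' n : (forall i, (i < n)%nat -> e i = e' i /\ c i = c' i) -> lc e c n = lc e' c' n.
Proof. revert e e' c c'; induction n; intros e e' c c' H; simpl. auto.
  destruct (H O ltac:(lia)) as [-> ->]. f_equal. apply IHn. intros; apply H; lia. Qed.

Lemma lc_add e c c' n : lc e (fun i => c i + c' i) n = add (lc e c n) (lc e c' n).
Proof. revert e c c'; induction n; intros; simpl. now rewrite ns_add_zero.
  rewrite IHn, ns_scal_distr_r. apply add_swap4. Qed.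

Lemma lc_scal e a c n : lc e (fun i => a * c i) n = scal a (lc e c n).
Proof. revert e c; induction n; intros; simpl. now rewrite scal_zero_r.
  rewrite IHn, ns_scal_distr_l, ns_scal_assoc. reflexivity. Qed.

Lemma lc_zero e n : lc e (fun _ => 0) n = zero.
Proof. rewrite <- (scal_zero_l (lc e (fun _ => 0) n)), <- lc_scal. apply lc_ext. intros; split; auto; ring. Qed.

Definition skip (j i : nat) : nat := if Nat.ltb i j then i else S i.

Lemma lc_skip e c m j : (j < S m)%nat ->
  lc e c (S m) = add (scal (c j) (e j)) (lc (fun i => e (skip j i)) (fun i => c (skip j i)) m).
Proof. revert e c j; induction m; intros e c j Hj.
  - assert (j = O) by lia. subst. reflexivity.
  - destruct j as [|j].
    + reflexivity.
    + change (lc e c (S (S m))) with (add (scal (c O) (e O)) (lc (fun i => e (S i)) (fun i => c (S i)) (S m))).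
      rewrite (IHm _ _ j) by lia. simpl.
      replace (skip (S j) 0) with O by reflexivity.
      rewrite !ns_add_assoc. rewrite (ns_add_comm N (scal (c O) (e O))). f_equal.
      apply lc_ext. intros i _. unfold skip. replace (S i <? S j) with (i <? j) by reflexivity. destruct (Nat.ltb i j); split; reflexivity.
Qed.

Lemma lincomb_lc cs l : lincomb N cs l = lc (fun i => nth i l zero) (fun i => nth i cs 0) (length l).
Proof. revert cs; induction l as [|x l IH]; intros cs. destruct cs; reflexivity.
  destruct cs as [|c cs].
  - simpl. rewrite scal_zero_l, add_zero_l.
    transitivity (lc (fun i => nth i l zero) (fun _ => 0) (length l)). symmetry; apply lc_zero.
    apply lc_ext. intros i _. split; auto.
  - simpl. f_equal. apply IH. Qed.

Definition spans (e : nat -> N) (n : nat) := forall v, exists c, v = lc e c n.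

Lemma min_nat (P : nat -> Prop) : (exists n, P n) -> exists n, P n /\ forall m, P m -> (n <= m)%nat.
Proof. intros [n Hn]. revert Hn. pattern n. apply (well_founded_ind Wf_nat.lt_wf). clear n.
  intros n IH Hn. destruct (classic (exists m, P m /\ (m < n)%nat)) as [[m [Hm Hmn]]|H].
  - apply (IH m Hmn Hm).
  - exists n. split; auto. intros m Hm. destruct (Nat.lt_ge_cases m n); auto. exfalso; eauto. Qed.

Lemma indep_basis : finite_dimensional N -> exists e n, spans e n /\
  forall c, lc e c n = zero -> forall i, (i < n)%nat -> c i = 0.
Proof.
  intro HN. destruct (min_nat (fun n => exists e, spans e n)) as [n [[e He] Hmin]].
  { destruct HN as [l Hl]. exists (length l), (fun i => nth i l zero). intro v.
    destruct (Hl v) as [cs ->]. eexists. apply lincomb_lc. }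
  exists e, n. split; auto. intros c Hc j Hj. apply NNPP. intro Hcj.
  destruct n as [|m]. lia.
  assert (Hsp : spans (fun i => e (skip j i)) m).
  { intro v. destruct (He v) as [a ->].
    set (a' := fun i => a i + (- (a j / c j)) * c i).
    assert (E : lc e a (S m) = lc e a' (S m)).
    { unfold a'. rewrite lc_add, lc_scal, Hc, scal_zero_r, ns_add_zero. reflexivity. }
    rewrite E, (lc_skip _ _ _ j Hj). assert (a' j = 0). { unfold a'. field. auto. }
    rewrite H, scal_zero_l, add_zero_l. eexists; reflexivity. }
  specialize (Hmin m (ex_intro (fun e => spans e m) _ Hsp)). lia.
Qed.

Lemma lc_norm_le e c n : norm (lc e c n) <= hs (fun i => Rabs (c i) * norm (e i)) n.
Proof. revert e c; induction n; intros; simpl. rewrite norm_zero; lra.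
  eapply Rle_trans. apply ns_norm_triangle. rewrite ns_norm_scal.
  specialize (IHn (fun i => e (S i)) (fun i => c (S i))). simpl in IHn. lra. Qed.

End NS.

Definition vsub (c c' : nat -> R) := fun i => c i - c' i.

Lemma fd_coords (N : NormedSpace) : finite_dimensional N ->
  exists (n : nat) (nu : (nat -> R) -> R) (coord : N -> nat -> R),
    (forall c c', nu (fun i => c i + c' i) <= nu c + nu c') /\
    (forall a c, nu (fun i => a * c i) = Rabs a * nu c) /\
    (forall c, 0 <= nu c) /\
    (exists K, 0 <= K /\ forall c, nu c <= K * hs (fun i => Rabs (c i)) n) /\
    (forall c, nu c = 0 -> forall i, (i < n)%nat -> c i = 0) /\
    (forall u v, ns_norm N (ns_add N u (ns_opp N v)) = nu (vsub (coord u) (coord v))).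
Proof.
  intro HN. destruct (indep_basis N HN) as (e & n & Hsp & Hind).
  assert (Hc : forall v, exists c, v = lc N e c n) by exact Hsp.
  destruct (choice _ Hc) as [coord Hcoord].
  exists n, (fun c => ns_norm N (lc N e c n)), coord.
  split; [|split; [|split; [|split; [|split]]]].
  - intros. rewrite lc_add. apply ns_norm_triangle.
  - intros. rewrite lc_scal. apply ns_norm_scal.
  - intros. apply norm_nonneg.
  - exists (hs (fun i => ns_norm N (e i)) n). split. apply hs_ge0; intros; apply norm_nonneg.
    intro c. eapply Rle_trans. apply lc_norm_le. rewrite <- hs_scal. apply hs_le.
    intros i Hi. rewrite (Rmult_comm _ (Rabs (c i))). apply Rmult_le_compat_l. apply Rabs_pos.
    apply (hs_term (fun i => ns_norm N (e i))); auto. intros; apply norm_nonneg.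
  - intros c H. apply Hind. apply ns_norm_eq0, H.
  - intros u v. rewrite (Hcoord u) at 1. rewrite (Hcoord v) at 1. rewrite opp_scal, <- lc_scal, <- lc_add.
    f_equal. apply lc_ext. intros; split; auto. unfold vsub; ring.
Qed.
Definition tends0 (f : nat -> R) := forall eps, 0 < eps -> exists N, forall k, (N <= k)%nat -> f k < eps.
Definition incr (phi : nat -> nat) := forall k, (phi k < phi (S k))%nat.

Lemma incr_ge phi : incr phi -> forall k, (k <= phi k)%nat.
Proof. intros H k; induction k. lia. specialize (H k); lia. Qed.

Lemma incr_mono phi : incr phi -> forall a b, (a < b)%nat -> (phi a < phi b)%nat.
Proof. intros H a b Hab. induction Hab. apply H. specialize (H m); lia. Qed.

Lemma incr_inj phi : incr phi -> forall a b, a <> b -> phi a <> phi b.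
Proof. intros H a b Hab. destruct (Nat.lt_gt_cases a b) as [[h|h] _]; auto.
  pose proof (incr_mono phi H a b h); lia. pose proof (incr_mono phi H b a h); lia. Qed.

Lemma incr_comp phi psi : incr phi -> incr psi -> incr (fun k => phi (psi k)).
Proof. intros H1 H2 k. apply incr_mono; auto. Qed.

Lemma tends0_sub f phi : incr phi -> tends0 f -> tends0 (fun k => f (phi k)).
Proof. intros Hp Hf eps He. destruct (Hf eps He) as [N HN]. exists N. intros k Hk.
  apply HN. pose proof (incr_ge phi Hp k); lia. Qed.

Lemma tends0_plus f g : tends0 f -> tends0 g -> tends0 (fun k => f k + g k).
Proof. intros Hf Hg eps He. destruct (Hf (eps/2) ltac:(lra)) as [N1 H1].
  destruct (Hg (eps/2) ltac:(lra)) as [N2 H2]. exists (N1 + N2)%nat. intros k Hk.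
  specialize (H1 k ltac:(lia)); specialize (H2 k ltac:(lia)). lra. Qed.

Lemma tends0_le f g : (forall k, f k <= g k) -> tends0 g -> tends0 f.
Proof. intros H Hg eps He. destruct (Hg eps He) as [N HN]. exists N; intros k Hk.
  specialize (HN k Hk); specialize (H k); lra. Qed.

Lemma tends0_scal c f : 0 <= c -> tends0 f -> tends0 (fun k => c * f k).
Proof. intros Hc Hf eps He. destruct (Hf (eps / (c+1))) as [N HN].
  apply Rdiv_lt_0_compat; lra. exists N; intros k Hk. specialize (HN k Hk).
  apply Rmult_lt_compat_l with (r := c + 1) in HN; [|lra]. field_simplify in HN; [|lra].
  destruct (Rle_lt_dec 0 (f k)). nra. nra. Qed.

Lemma inv_small eps : 0 < eps -> exists N, forall k, (N <= k)%nat -> / INR (S k) < eps.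
Proof. intros He. destruct (archimed (/ eps)) as [H1 _].
  assert (0 <= up (/eps))%Z. { apply le_IZR. pose proof (Rinv_0_lt_compat eps He). lra. }
  exists (Z.to_nat (up (/eps))). intros k Hk.
  assert (INR (S k) > / eps). { rewrite S_INR. apply le_INR in Hk. rewrite INR_IZR_INZ, Z2Nat.id in Hk by lia. lra. }
  pose proof (Rinv_0_lt_compat eps He).
  rewrite <- (Rinv_inv eps). apply Rinv_lt_contravar. apply Rmult_lt_0_compat. apply Rinv_0_lt_compat; auto.
  lra. lra. Qed.

Lemma BW1 (u : nat -> R) M : (forall k, Rabs (u k) <= M) ->
  exists phi l, incr phi /\ tends0 (fun k => Rabs (u (phi k) - l)).
Proof.
  intro HM. destruct (Bolzano_Weierstrass u (fun c => -M <= c <= M) (compact_P3 (-M) M)) as [l Hl].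
  { intro k. specialize (HM k). unfold Rabs in HM; destruct (Rcase_abs (u k)); lra. }
  assert (H : forall N k, exists p, (N <= p)%nat /\ Rabs (u p - l) < / INR (S k)).
  { intros N k. assert (Hpos : 0 < / INR (S k)). { apply Rinv_0_lt_compat, lt_0_INR; lia. }
    destruct (Hl (disc l (mkposreal _ Hpos)) N) as [p [Hp1 Hp2]].
    exists (mkposreal _ Hpos). intros x Hx; exact Hx. exists p; split; auto. }
  destruct (choice (fun Nk : nat * nat => fun p => (fst Nk <= p)%nat /\ Rabs (u p - l) < / INR (S (snd Nk)))) as [F HF].
  { intros [N k]; apply H. }
  set (phi := fix phi k := match k with O => F (O, O) | S k => F (S (phi k), S k) end).
  exists phi, l. split.
  - intro k. simpl. destruct (HF (S (phi k), S k)) as [H1 _]. simpl in H1. lia.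
  - intros eps He. destruct (inv_small eps He) as [N HN]. exists N. intros k Hk.
    eapply Rlt_trans; [|apply (HN k Hk)]. destruct k; simpl.
    + apply (HF (O, O)).
    + apply (HF (S (phi k), S k)).
Qed.

Definition s1 n (c : nat -> R) := hs (fun i => Rabs (c i)) n.

Lemma BWn n : forall (u : nat -> nat -> R) M, (forall k i, (i < n)%nat -> Rabs (u k i) <= M) ->
  exists phi L, incr phi /\ tends0 (fun k => s1 n (fun i => u (phi k) i - L i)).
Proof.
  induction n; intros u M HM.
  - exists (fun k => k), (fun _ => 0). split. intro; lia. intros eps He; exists O; intros; simpl. unfold s1; simpl. lra.
  - destruct (IHn (fun k i => u k (S i)) M) as [phi [L [Hphi HL]]].
    { intros; apply HM; lia. }
    destruct (BW1 (fun k => u (phi k) O) M) as [psi [l0 [Hpsi Hl0]]].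
    { intros; apply HM; lia. }
    exists (fun k => phi (psi k)), (fun i => match i with O => l0 | S i => L i end). split.
    + apply incr_comp; auto.
    + unfold s1; simpl. apply tends0_plus. exact Hl0.
      apply (tends0_sub _ psi Hpsi HL).
Qed.
Section G.
Variable p : R.
Hypothesis Hp : 1 < p.
Definition G t := rpow_nonneg t p.

Lemma Rpower_pos' x y : 0 < Rpower x y.
Proof. unfold Rpower. apply exp_pos. Qed.

Lemma G_nonpos t : t <= 0 -> G t = 0.
Proof. intro. unfold G, rpow_nonneg. destruct (Rle_dec t 0); auto; lra. Qed.

Lemma G_pos t : 0 < t -> G t = Rpower t (p - 1) * t.
Proof. intro. unfold G, rpow_nonneg. destruct (Rle_dec t 0). lra.
  replace p with ((p - 1) + 1) at 1 by ring. rewrite Rpower_plus, Rpower_1; auto. Qed.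

Lemma G_ge0 t : 0 <= G t.
Proof. destruct (Rle_dec t 0). rewrite G_nonpos; lra. rewrite G_pos by lra.
  pose proof (Rpower_pos' t (p-1)). nra. Qed.

Lemma Rp_mono a b : 0 < a <= b -> Rpower a (p-1) <= Rpower b (p-1).
Proof. intro. apply Rle_Rpower_l; lra. Qed.

Lemma G_mono a b : 0 <= a <= b -> G a <= G b.
Proof. intro. destruct (Rle_dec a 0). rewrite (G_nonpos a); auto. apply G_ge0.
  rewrite !G_pos by lra. pose proof (Rp_mono a b ltac:(lra)). pose proof (Rpower_pos' a (p-1)). nra. Qed.

Lemma GI A B : 0 < B <= A -> Rpower B (p - 1) * (A - B) <= G A - G B.
Proof. intro. rewrite !G_pos by lra. pose proof (Rp_mono B A ltac:(lra)). nra. Qed.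

Lemma Rp_small c : 0 < c -> exists d, 0 < d /\ forall t, 0 < t < d -> Rpower t (p - 1) < c.
Proof. intro. exists (Rpower c (/ (p - 1))). split. apply Rpower_pos'. intros t Ht.
  replace c with (Rpower (Rpower c (/ (p - 1))) (p - 1)) at 1.
  apply Rlt_Rpower_l; lra. rewrite Rpower_mult. replace (/ (p-1) * (p-1)) with 1 by (field; lra).
  apply Rpower_1; auto. Qed.

Lemma Rp_large c : exists R, 0 < R /\ forall t, R <= t -> c <= Rpower t (p - 1).
Proof. set (c' := Rabs c + 1). assert (0 < c') by (unfold c'; pose proof (Rabs_pos c); lra).
  exists (Rpower c' (/ (p - 1))). split. apply Rpower_pos'. intros t Ht.
  apply Rle_trans with c'. unfold c'; pose proof (RRle_abs c); lra.
  replace c' with (Rpower (Rpower c' (/ (p - 1))) (p - 1)) at 1.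
  apply Rle_Rpower_l. lra. split; auto. apply Rpower_pos'.
  rewrite Rpower_mult. replace (/ (p-1) * (p-1)) with 1 by (field; lra).
  apply Rpower_1; auto. Qed.
End G.
Lemma hs_zero m : hs (fun _ => 0) m = 0.
Proof. induction m; simpl; auto. rewrite IHm; ring. Qed.

Section Nu.
Variables (n : nat) (nu : (nat -> R) -> R) (K : R).
Hypothesis nu_tri : forall c c', nu (fun i => c i + c' i) <= nu c + nu c'.
Hypothesis nu_hom : forall a c, nu (fun i => a * c i) = Rabs a * nu c.
Hypothesis nu_ge0 : forall c, 0 <= nu c.
Hypothesis HK : 0 <= K.
Hypothesis nu_K : forall c, nu c <= K * s1 n c.
Hypothesis nu_def : forall c, nu c = 0 -> forall i, (i < n)%nat -> c i = 0.

Definition D (a b : nat -> R) := nu (fun i => a i - b i).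

Lemma nu_ext c c' : (forall i, c i = c' i) -> nu c = nu c'.
Proof. intro H. f_equal. apply functional_extensionality; auto. Qed.

Lemma nu_pos_scal a c : 0 <= a -> nu (fun i => a * c i) = a * nu c.
Proof. intro. rewrite nu_hom, Rabs_pos_eq; auto. Qed.

Lemma D_sym a b : D a b = D b a.
Proof. unfold D. rewrite <- (Rmult_1_l (nu (fun i => b i - a i))). rewrite <- Rabs_R1.
  rewrite <- Rabs_Ropp, <- nu_hom. apply nu_ext. intro; ring. Qed.

Lemma D_tri a b c : D a c <= D a b + D b c.
Proof. unfold D. eapply Rle_trans; [|apply nu_tri]. right; apply nu_ext; intro; ring. Qed.

Lemma nu_sub_le a b : nu a <= nu b + nu (fun i => a i - b i).
Proof. eapply Rle_trans; [|apply nu_tri]. right; apply nu_ext; intro; ring. Qed.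

Lemma nu_pos_s1 c : 0 < s1 n c -> 0 < nu c.
Proof. intro H. destruct (nu_ge0 c) as [h|h]; auto. exfalso.
  assert (s1 n c = 0). { unfold s1. rewrite (hs_ext _ (fun _ => 0)). apply hs_zero.
    intros i Hi. rewrite (nu_def c (eq_sym h) i Hi). apply Rabs_R0. }
  lra. Qed.

Lemma CL x z s t : 0 < s <= t ->
  (t / s) * (nu (fun i => x i - s * z i) - nu x) <= nu (fun i => x i - t * z i) - nu x.
Proof. intro Hst.
  assert (E : nu (fun i => x i - s * z i) = nu (fun i => (1 - s/t) * x i + (s/t) * (x i - t * z i))).
  { apply nu_ext. intro i. field. lra. }
  assert (H : nu (fun i => x i - s * z i) <= (1 - s/t) * nu x + (s/t) * nu (fun i => x i - t * z i)).
  { rewrite E. eapply Rle_trans. apply (nu_tri (fun i => (1 - s/t) * x i) (fun i => (s/t) * (x i - t * z i))).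
    rewrite !nu_pos_scal. lra. apply Rlt_le, Rdiv_lt_0_compat; lra.
    assert (s / t <= 1). { unfold Rdiv. apply (Rmult_le_reg_r t). lra. rewrite Rmult_assoc, Rinv_l by lra. lra. } lra. }
  assert (0 < t / s) by (apply Rdiv_lt_0_compat; lra).
  apply Rmult_le_compat_l with (r := t / s) in H; [|lra].
  replace (t / s * ((1 - s / t) * nu x + s / t * nu (fun i => x i - t * z i))) with
    (t / s * nu x - nu x + nu (fun i => x i - t * z i)) in H by (field; lra).
  lra. Qed.

Lemma nu_swap a b : nu (fun i => a i - b i) = nu (fun i => b i - a i).
Proof. apply (D_sym a b). Qed.

Lemma caseU p (Hp : 1 < p) (P : nat -> nat -> R) (O W : nat -> R) (s : nat -> R) (Wk : nat -> nat -> R) :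
  (forall a b, a <> b -> 0 < D (P a) (P b)) ->
  (forall k j, G p (D (P k) O) <= G p (D (P k) (P j)) + G p (D (P j) O)) ->
  (forall k i, P k i = O i + s k * Wk k i) ->
  (forall k, 0 < s k) -> (forall M, exists N, forall k, (N <= k)%nat -> M < s k) ->
  tends0 (fun k => nu (fun i => Wk k i - W i)) -> 0 < nu W -> False.
Proof.
  intros Hd Htri HP Hs Hinf Heps Hw.
  set (w := nu W) in *.
  assert (HA : forall k, D (P k) O = s k * nu (Wk k)).
  { intro k. unfold D. rewrite <- nu_pos_scal by (left; apply Hs). apply nu_ext. intro i. rewrite HP. ring. }
  assert (HWk' : forall k, w <= nu (Wk k) + nu (fun i => Wk k i - W i)).
  { intro k. eapply Rle_trans. apply (nu_sub_le W (Wk k)). rewrite nu_swap. lra. }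
  assert (Ua : forall j eta, 0 < eta -> exists N, forall k, (N <= k)%nat -> D (P k) O - eta <= D (P k) (P j)).
  { intros j eta He.
    set (Gam := G p (D (P j) O)).
    assert (HG0 : 0 <= Gam) by apply G_ge0.
    destruct (Rp_large p Hp ((Gam + 1) / eta)) as [Rl [HR0 HR]].
    destruct (Heps (w/2) ltac:(lra)) as [N1 HN1].
    assert (HDj : 0 <= D (P j) O) by apply nu_ge0.
    destruct (Hinf (2 * (Rl + D (P j) O) / w)) as [N2 HN2].
    exists (S j + N1 + N2)%nat. intros k Hk.
    specialize (HN1 k ltac:(lia)). specialize (HN2 k ltac:(lia)).
    assert (Hnu : w / 2 < nu (Wk k)) by (specialize (HWk' k); lra).
    assert (HAk : Rl + D (P j) O < D (P k) O).
    { rewrite (HA k). set (M := 2 * (Rl + D (P j) O) / w) in *.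
      assert (HM : M * (w/2) = Rl + D (P j) O) by (unfold M; field; lra).
      assert (0 <= M) by (unfold M; apply Rmult_le_pos; [lra| left; apply Rinv_0_lt_compat; lra]).
      pose proof (Hs k). nra. }
    destruct (Rle_lt_dec (D (P k) O - eta) (D (P k) (P j))) as [ok|bad]; auto. exfalso.
    pose proof (D_tri (P k) (P j) O) as Ht3.
    set (A := D (P k) O) in *. set (B := D (P k) (P j)) in *.
    assert (HB0 : 0 < B) by (apply Hd; lia).
    assert (HBR : Rl <= B) by lra.
    pose proof (GI p Hp A B ltac:(lra)) as HGI.
    pose proof (HR B HBR) as HRB.
    specialize (Htri k j). fold A B Gam in Htri.
    assert (E : (Gam + 1) / eta * eta = Gam + 1) by (field; lra).
    assert (0 <= (Gam + 1) / eta) by (apply Rmult_le_pos; [lra| left; apply Rinv_0_lt_compat; lra]).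
    assert ((Gam+1)/eta * eta <= Rpower B (p-1) * (A - B)) by (apply Rmult_le_compat; lra).
    lra. }
  assert (Ubc : forall j tau, 0 < tau -> w <= nu (fun i => W i - tau * (P j i - O i))).
  { intros j tau Ht. apply Rle_plus_epsilon. intros del Hdel.
    set (eta := del / (2 * tau)).
    assert (Heta : 0 < eta) by (unfold eta; apply Rdiv_lt_0_compat; lra).
    assert (Hte : tau * eta = del / 2) by (unfold eta; field; lra).
    destruct (Ua j eta Heta) as [N1 HN1].
    destruct (Hinf (/ tau)) as [N2 HN2].
    destruct (Heps (del/4) ltac:(lra)) as [N3 HN3].
    set (k := (N1 + N2 + N3)%nat).
    specialize (HN1 k ltac:(lia)); specialize (HN2 k ltac:(lia)); specialize (HN3 k ltac:(lia)).
    pose proof (Hs k) as Hsk.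
    set (t := / s k).
    assert (Ht0 : 0 < t) by (apply Rinv_0_lt_compat, Hs).
    assert (Htt : t <= tau).
    { unfold t. rewrite <- (Rinv_inv tau). apply Rinv_le_contravar. apply Rinv_0_lt_compat; lra. lra. }
    assert (E1 : nu (fun i => Wk k i - t * (P j i - O i)) = t * D (P k) (P j)).
    { unfold D. rewrite <- nu_pos_scal by lra. apply nu_ext. intro i. rewrite (HP k i). unfold t. field. lra. }
    pose proof (CL (Wk k) (fun i => P j i - O i) t tau ltac:(lra)) as HCL. simpl in HCL. rewrite E1 in HCL.
    rewrite HA in HN1.
    assert (Hts : t * s k = 1) by (unfold t; field; lra).
    assert (H1 : t * D (P k) (P j) - nu (Wk k) >= - (t * eta)).
    { assert (t * (s k * nu (Wk k) - eta) <= t * D (P k) (P j)) by (apply Rmult_le_compat_l; lra).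
      replace (t * (s k * nu (Wk k) - eta)) with (t * s k * nu (Wk k) - t * eta) in H by ring.
      rewrite Hts in H. lra. }
    assert (H2 : tau / t * (t * D (P k) (P j) - nu (Wk k)) >= - (tau * eta)).
    { assert (0 < tau / t) by (apply Rdiv_lt_0_compat; lra).
      replace (- (tau * eta)) with (tau / t * (- (t * eta))) by (field; lra).
      apply Rle_ge, Rmult_le_compat_l; lra. }
    pose proof (nu_sub_le (fun i => Wk k i - tau * (P j i - O i)) (fun i => W i - tau * (P j i - O i))) as H3. cbv beta in H3.
    rewrite (nu_ext (fun i => (Wk k i - tau * (P j i - O i)) - (W i - tau * (P j i - O i))) (fun i => Wk k i - W i)) in H3 by (intro; ring).
    specialize (HWk' k). lra. }
  destruct (Heps (w/2) ltac:(lra)) as [N HN]. specialize (HN N (le_n N)).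
  pose proof (Hs N) as HsN.
  pose proof (Ubc N (/ (2 * s N)) ltac:(apply Rinv_0_lt_compat; lra)) as HU.
  rewrite (nu_ext _ (fun i => (/2) * W i + (/2) * (W i - Wk N i))) in HU.
  2:{ intro i. rewrite (HP N i). field. lra. }
  pose proof (nu_tri (fun i => / 2 * W i) (fun i => / 2 * (W i - Wk N i))) as HT.
  rewrite !nu_pos_scal in HT by lra. rewrite nu_swap in HT. fold w in HT. lra.
Qed.

Lemma caseB p (Hp : 1 < p) (P : nat -> nat -> R) (V W : nat -> R) (s : nat -> R) (Wk : nat -> nat -> R) (K1 : R) :
  (forall a b, a <> b -> 0 < D (P a) (P b)) ->
  (forall i j k, G p (D (P i) (P k)) <= G p (D (P i) (P j)) + G p (D (P j) (P k))) ->
  (forall k i, P k i = V i + s k * Wk k i) -> (forall k, 0 < s k) -> tends0 s ->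
  (forall k, 0 < nu (Wk k)) -> (forall k, nu (Wk k) <= K1) ->
  tends0 (fun k => nu (fun i => Wk k i - W i)) -> 0 < nu W -> False.
Proof.
  intros Hd Htri HP Hs Hs0 Hpos HK1 Heps Hw.
  set (w := nu W) in *.
  assert (HK1p : 0 < K1) by (specialize (Hpos O); specialize (HK1 O); lra).
  assert (HPV : forall k, D (P k) V = s k * nu (Wk k)).
  { intro k. unfold D. rewrite <- nu_pos_scal by (left; apply Hs). apply nu_ext. intro i. rewrite HP. ring. }
  assert (HPVK : forall k, D (P k) V <= s k * K1).
  { intro k. rewrite HPV. apply Rmult_le_compat_l. left; apply Hs. apply HK1. }
  assert (HWk' : forall k, w <= nu (Wk k) + nu (fun i => Wk k i - W i)).
  { intro k. eapply Rle_trans. apply (nu_sub_le W (Wk k)). rewrite nu_swap. lra. }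
  assert (Ba : forall i eta, 0 < eta -> exists J, forall j, (J <= j)%nat -> j <> i ->
             D (P i) V - eta * s j <= D (P i) (P j)).
  { intros i eta He.
    set (A := D (P i) V).
    assert (HA0 : 0 < A). { unfold A. rewrite HPV. apply Rmult_lt_0_compat; auto. }
    set (L := K1 + eta / 2). assert (HL : 0 < L) by (unfold L; lra).
    set (RA := Rpower (A/2) (p-1)). assert (HRA : 0 < RA) by apply Rpower_pos'.
    set (c := RA * eta / (2 * L)).
    assert (Hc : 0 < c). { unfold c. apply Rdiv_lt_0_compat. nra. lra. }
    destruct (Rp_small p Hp c Hc) as [del [Hdel Hsmall]].
    destruct (Hs0 (Rmin (del / L) (A / (2 * K1)))) as [J HJ].
    { apply Rmin_pos; apply Rdiv_lt_0_compat; lra. }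
    exists J. intros j Hj Hji. specialize (HJ j Hj).
    assert (Hsj1 : s j * L < del).
    { assert (s j < del / L) by (eapply Rlt_le_trans; [exact HJ| apply Rmin_l]).
      apply Rmult_lt_compat_r with (r := L) in H; auto. unfold Rdiv in H. rewrite Rmult_assoc, Rinv_l in H; lra. }
    assert (Hsj2 : s j * K1 < A / 2).
    { assert (s j < A / (2 * K1)) by (eapply Rlt_le_trans; [exact HJ| apply Rmin_r]).
      apply Rmult_lt_compat_r with (r := K1) in H; auto.
      replace (A / (2 * K1) * K1) with (A / 2) in H by (field; lra). lra. }
    pose proof (Hs j) as Hsj.
    destruct (Rle_lt_dec (A - eta * s j) (D (P i) (P j))) as [ok|bad]; auto. exfalso.
    set (B := D (P i) (P j)) in *.
    assert (HB0 : 0 < B) by (apply Hd; auto).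
    set (e := eta * s j / 2).
    destruct (Hs0 (e / K1)) as [N HN]. { unfold e. apply Rdiv_lt_0_compat; [|lra]. nra. }
    specialize (HN N (le_n N)). set (k := N) in *.
    assert (HkV : D (P k) V < e).
    { eapply Rle_lt_trans. apply HPVK. apply Rmult_lt_compat_r with (r := K1) in HN; auto.
      replace (e / K1 * K1) with e in HN by (field; lra). lra. }
    pose proof (HPVK j) as HjV.
    assert (H1 : A - e <= D (P i) (P k)) by (pose proof (D_tri (P i) (P k) V); unfold A; lra).
    assert (H2 : D (P j) (P k) <= s j * L).
    { pose proof (D_tri (P j) V (P k)). rewrite (D_sym V (P k)) in H. assert (s j * L = s j * K1 + e) by (unfold L, e; field). lra. }
    assert (H3 : A / 2 <= B) by (pose proof (D_tri (P i) (P j) V); unfold A, B in *; lra).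
    assert (He2 : e = eta * s j / 2) by reflexivity.
    assert (H4 : B < A - e) by nra.
    pose proof (Htri i j k) as HT. fold B in HT.
    pose proof (G_mono p Hp (A - e) (D (P i) (P k)) ltac:(lra)) as HM1.
    pose proof (G_mono p Hp (D (P j) (P k)) (s j * L) ltac:(split; [apply nu_ge0| lra])) as HM2.
    pose proof (GI p Hp (A - e) B ltac:(lra)) as HGI.
    pose proof (Rp_mono p Hp (A/2) B ltac:(lra)) as HRm. fold RA in HRm.
    rewrite (G_pos p (s j * L)) in HM2 by nra.
    pose proof (Hsmall (s j * L) ltac:(split; nra)) as Hsm.
    assert (HcL : c * L = RA * eta / 2) by (unfold c; field; lra).
    assert (X1 : RA * (eta * s j / 2) <= Rpower B (p - 1) * (A - e - B)).
    { apply Rmult_le_compat; try lra; nra. }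
    assert (X2 : Rpower (s j * L) (p - 1) * (s j * L) < c * (s j * L)).
    { apply Rmult_lt_compat_r; nra. }
    nra. }
  assert (Bc : forall i t, 0 < t -> D (P i) V <= nu (fun l => (P i l - V l) - t * W l)).
  { intros i t Ht. apply Rle_plus_epsilon. intros del Hdel.
    set (eta := del / t). assert (Heta : 0 < eta) by (unfold eta; apply Rdiv_lt_0_compat; lra).
    assert (Hte : eta * t = del) by (unfold eta; field; lra).
    destruct (Ba i (eta/2) ltac:(lra)) as [J HJ].
    destruct (Hs0 t Ht) as [N2 HN2].
    destruct (Heps (eta/2) ltac:(lra)) as [N3 HN3].
    set (j := (J + N2 + N3 + S i)%nat).
    specialize (HJ j ltac:(unfold j; lia) ltac:(unfold j; lia)).
    specialize (HN2 j ltac:(unfold j; lia)). specialize (HN3 j ltac:(unfold j; lia)).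
    pose proof (Hs j) as Hsj.
    set (x := fun l => P i l - V l).
    assert (Ex : nu x = D (P i) V) by reflexivity.
    assert (E1 : nu (fun l => x l - s j * Wk j l) = D (P i) (P j)).
    { unfold D. apply nu_ext. intro l. unfold x. rewrite (HP j l). ring. }
    pose proof (nu_sub_le (fun l => x l - s j * Wk j l) (fun l => x l - s j * W l)) as H3. cbv beta in H3.
    rewrite (nu_ext (fun l => x l - s j * Wk j l - (x l - s j * W l)) (fun l => s j * (W l - Wk j l))) in H3 by (intro; unfold x; ring).
    rewrite nu_pos_scal in H3 by lra. rewrite (nu_swap W (Wk j)) in H3. rewrite E1 in H3.
    pose proof (CL x W (s j) t ltac:(lra)) as HCL. cbv beta in HCL. rewrite Ex in HCL.
    assert (H5 : - (eta * s j) <= nu (fun l => x l - s j * W l) - D (P i) V).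
    { assert (s j * nu (fun i0 => Wk j i0 - W i0) <= s j * (eta / 2)) by (apply Rmult_le_compat_l; lra). lra. }
    assert (H6 : t / s j * (- (eta * s j)) <= t / s j * (nu (fun l => x l - s j * W l) - D (P i) V)).
    { apply Rmult_le_compat_l; auto. left; apply Rdiv_lt_0_compat; lra. }
    replace (t / s j * (- (eta * s j))) with (- (eta * t)) in H6 by (field; lra).
    change (nu (fun l => P i l - V l - t * W l)) with (nu (fun l => x l - t * W l)). lra. }
  destruct (Heps (w/4) ltac:(lra)) as [N HN]. specialize (HN N (le_n N)).
  pose proof (Hs N) as HsN.
  pose proof (Bc N (s N / 2) ltac:(lra)) as HB.
  rewrite (nu_ext _ (fun l => s N * ((Wk N l - W l) + / 2 * W l))) in HB.
  2:{ intro l. rewrite (HP N l). field. }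
  rewrite nu_pos_scal in HB by lra. rewrite HPV in HB.
  pose proof (nu_tri (fun l => Wk N l - W l) (fun l => / 2 * W l)) as HT. cbv beta in HT.
  rewrite nu_pos_scal in HT by lra. fold w in HT.
  pose proof (HWk' N).
  apply Rmult_le_reg_l in HB; auto.
  lra.
Qed.

Lemma s1_ge0 c : 0 <= s1 n c.
Proof. apply hs_ge0. intros; apply Rabs_pos. Qed.

Lemma s1_term c i : (i < n)%nat -> Rabs (c i) <= s1 n c.
Proof. intro. apply (hs_term (fun i => Rabs (c i))); auto. intros; apply Rabs_pos. Qed.

Lemma s1_tri a b : s1 n (fun i => a i + b i) <= s1 n a + s1 n b.
Proof. unfold s1. rewrite <- hs_plus. apply hs_le. intros; apply Rabs_triang. Qed.

Lemma s1_scal a c : s1 n (fun i => a * c i) = Rabs a * s1 n c.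
Proof. unfold s1. rewrite <- hs_scal. apply hs_ext. intros; apply Rabs_mult. Qed.

Lemma s1_ext a b : (forall i, a i = b i) -> s1 n a = s1 n b.
Proof. intro H. unfold s1. apply hs_ext. intros; now rewrite H. Qed.

Lemma nu_s1_0 c : s1 n c = 0 -> nu c = 0.
Proof. intro H. pose proof (nu_K c). rewrite H, Rmult_0_r in H0. pose proof (nu_ge0 c). lra. Qed.

Lemma normalize (u : nat -> nat -> R) (s : nat -> R) :
  (forall k, 0 < s k) -> (forall k, s1 n (u k) = s k) ->
  exists (psi : nat -> nat) (W : nat -> R), incr psi /\ 0 < nu W /\
   tends0 (fun k => nu (fun i => / s (psi k) * u (psi k) i - W i)) /\
   (forall k, 0 < nu (fun i => / s k * u k i)) /\ (forall k, nu (fun i => / s k * u k i) <= K).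
Proof.
  intros Hs Hu.
  assert (H1 : forall k, s1 n (fun i => / s k * u k i) = 1).
  { intro k. rewrite s1_scal, Hu, Rabs_pos_eq. field. specialize (Hs k); lra. left; apply Rinv_0_lt_compat, Hs. }
  destruct (BWn n (fun k i => / s k * u k i) 1) as [psi [W [Hpsi HW]]].
  { intros k i Hi. rewrite <- (H1 k). apply (s1_term (fun i => / s k * u k i)); auto. }
  exists psi, W. split; [auto|split; [|split; [|split]]].
  - destruct (nu_ge0 W) as [h|h]; auto. exfalso.
    destruct (HW (1/2) ltac:(lra)) as [N HN]. specialize (HN N (le_n N)).
    assert (E : s1 n (fun i => / s (psi N) * u (psi N) i - W i) = s1 n (fun i => / s (psi N) * u (psi N) i)).
    { unfold s1. apply hs_ext. intros i Hi. rewrite (nu_def W (eq_sym h) i Hi). f_equal; ring. }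
    rewrite E, H1 in HN. lra.
  - apply (tends0_le _ (fun k => K * s1 n (fun i => / s (psi k) * u (psi k) i - W i))).
    intro k. apply nu_K. apply tends0_scal; auto.
  - intro k. apply nu_pos_s1. rewrite H1; lra.
  - intro k. eapply Rle_trans. apply nu_K. rewrite H1. lra.
Qed.

Lemma incr_shift m : incr (fun k => (k + m)%nat).
Proof. intro k; lia. Qed.

Lemma INR_large M : exists N : nat, M < INR N.
Proof. destruct (archimed M) as [H _]. destruct (Z_le_gt_dec 0 (up M)).
  - exists (Z.to_nat (up M)). rewrite INR_IZR_INZ, Z2Nat.id; auto.
  - exists O. simpl. apply Rlt_trans with (IZR (up M)); auto. apply IZR_lt; lia. Qed.

Lemma infinite_contra p (Hp : 1 < p) (Y : nat -> nat -> R) :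
  (forall a b, a <> b -> 0 < D (Y a) (Y b)) ->
  (forall a b c, G p (D (Y a) (Y c)) <= G p (D (Y a) (Y b)) + G p (D (Y b) (Y c))) -> False.
Proof.
  intros Yd Yt.
  destruct (classic (exists M, forall k, s1 n (Y k) <= M)) as [[M HM]|HU].
  - destruct (BWn n Y M) as [phi [V [Hphi HV]]].
    { intros k i Hi. eapply Rle_trans. apply s1_term; auto. apply HM. }
    assert (Hz : forall a b, s1 n (fun i => Y (phi a) i - V i) = 0 -> s1 n (fun i => Y (phi b) i - V i) = 0 -> a = b).
    { intros a b Ha Hb. destruct (Nat.eq_dec a b) as [|Hab]; auto. exfalso.
      pose proof (Yd _ _ (incr_inj phi Hphi a b Hab)).
      pose proof (D_tri (Y (phi a)) V (Y (phi b))). rewrite (D_sym V) in H0.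
      unfold D in H0 at 2 3. rewrite (nu_s1_0 _ Ha), (nu_s1_0 _ Hb) in H0. lra. }
    assert (Hm : exists m, forall k, 0 < s1 n (fun i => Y (phi (k + m)%nat) i - V i)).
    { destruct (classic (exists k1, s1 n (fun i => Y (phi k1) i - V i) = 0)) as [[k1 Hk1]|Hno].
      - exists (S k1). intro k. destruct (s1_ge0 (fun i => Y (phi (k + S k1)%nat) i - V i)) as [h|h]; auto.
        exfalso. pose proof (Hz _ _ Hk1 (eq_sym h)). lia.
      - exists O. intro k. destruct (s1_ge0 (fun i => Y (phi (k + O)%nat) i - V i)) as [h|h]; auto.
        exfalso. apply Hno. eexists; symmetry; exact h. }
    destruct Hm as [m Hm].
    set (sk := fun k => s1 n (fun i => Y (phi (k + m)%nat) i - V i)).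
    destruct (normalize (fun k i => Y (phi (k + m)%nat) i - V i) sk Hm (fun k => eq_refl)) as
      (psi & W & Hpsi & HW & Heps & Hpos & HK1).
    apply (caseB p Hp (fun k => Y (phi (psi k + m)%nat)) V W (fun k => sk (psi k))
             (fun k i => / sk (psi k) * (Y (phi (psi k + m)%nat) i - V i)) K).
    + intros a b Hab. apply Yd. apply (incr_inj phi Hphi). intro E. apply (incr_inj psi Hpsi a b Hab). lia.
    + intros; apply Yt.
    + intros k i. pose proof (Hm (psi k)). field. unfold sk; lra.
    + intro k. apply Hm.
    + apply (tends0_sub (fun k => sk k) psi Hpsi). unfold sk.
      apply (tends0_sub (fun k => s1 n (fun i => Y (phi k) i - V i)) (fun k => (k + m)%nat) (incr_shift m) HV).
    + intro k. apply (Hpos (psi k)).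
    + intro k. apply (HK1 (psi k)).
    + exact Heps.
    + exact HW.
  - assert (HU' : forall M, exists k, M < s1 n (fun i => Y k i - Y O i)).
    { intro M. apply NNPP. intro H. apply HU. exists (M + s1 n (Y O)). intro k.
      pose proof (s1_tri (fun i => Y k i - Y O i) (Y O)). cbv beta in H0.
      rewrite (s1_ext (fun i => Y k i - Y O i + Y O i) (Y k)) in H0 by (intro; ring).
      destruct (Rle_lt_dec (s1 n (fun i => Y k i - Y O i)) M). lra. exfalso; apply H; eauto. }
    destruct (choice _ HU') as [F HF].
    set (phi := fix phi k := match k with O => F 1 | S k => F (s1 n (fun i => Y (phi k) i - Y O i) + 1) end).
    set (sZ := fun k => s1 n (fun i => Y (phi k) i - Y O i)).
    assert (Hstep : forall k, sZ k + 1 < sZ (S k)) by (intro k; apply HF).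
    assert (H0 : 1 < sZ O) by apply HF.
    assert (Hbig : forall k, INR k < sZ k).
    { induction k. simpl; lra. rewrite S_INR. specialize (Hstep k). lra. }
    assert (Hsp : forall k, 0 < sZ k). { intro k. specialize (Hbig k). pose proof (pos_INR k). lra. }
    assert (Hmono : forall a b, (a < b)%nat -> sZ a < sZ b).
    { intros a b Hab. induction Hab. specialize (Hstep a); lra. specialize (Hstep m); lra. }
    assert (Hinj : forall a b, a <> b -> phi a <> phi b).
    { intros a b Hab E. assert (sZ a = sZ b) by (unfold sZ; now rewrite E).
      destruct (Nat.lt_gt_cases a b) as [[h|h] _]; auto; pose proof (Hmono _ _ h); lra. }
    destruct (normalize (fun k i => Y (phi k) i - Y O i) sZ Hsp (fun k => eq_refl)) as
      (psi & W & Hpsi & HW & Heps & Hpos & HK1).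
    apply (caseU p Hp (fun k => Y (phi (psi k))) (Y O) W (fun k => sZ (psi k))
             (fun k i => / sZ (psi k) * (Y (phi (psi k)) i - Y O i))).
    + intros a b Hab. apply Yd. apply Hinj. apply (incr_inj psi Hpsi); auto.
    + intros; apply Yt.
    + intros k i. pose proof (Hsp (psi k)). field. lra.
    + intro k; apply Hsp.
    + intro M. destruct (INR_large M) as [N HN]. exists N. intros k Hk.
      pose proof (Hbig (psi k)). pose proof (incr_ge psi Hpsi k). apply le_INR in Hk. apply le_INR in H1. lra.
    + exact Heps.
    + exact HW.
Qed.

End Nu.

Lemma inf_seq (X : Type) : ~ finite_type X -> exists xs : nat -> X, forall a b, a <> b -> xs a <> xs b.
Proof.
  intro Hn. assert (H : forall l : list X, exists x, ~ In x l).
  { intro l. apply NNPP. intro H. apply Hn. exists l. intro x. apply NNPP. intro Hx. apply H. eauto. }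
  destruct (choice _ H) as [g Hg].
  set (lst := fix lst k := match k with O => nil | S k => g (lst k) :: lst k end).
  exists (fun k => g (lst k)).
  assert (Hin : forall a b, (a < b)%nat -> In (g (lst a)) (lst b)).
  { intros a b Hab. induction Hab. simpl. auto. simpl. auto. }
  intros a b Hab E. destruct (Nat.lt_gt_cases a b) as [[h|h] _]; auto.
  - apply (Hg (lst b)). rewrite <- E. auto.
  - apply (Hg (lst a)). rewrite E. auto.
Qed.

Lemma G_rpow alpha t : 0 < alpha -> 0 <= t -> G (/ alpha) (rpow_nonneg t alpha) = t.
Proof. intros Ha Ht. unfold G, rpow_nonneg. destruct (Rle_dec t 0).
  - destruct (Rle_dec 0 0); lra.
  - assert (0 < Rpower t alpha) by apply Rpower_pos'.
    destruct (Rle_dec (Rpower t alpha) 0). lra.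
    rewrite Rpower_mult. replace (alpha * / alpha) with 1 by (field; lra). apply Rpower_1; lra.
Qed.

Theorem corollary2p3 (X : Type) (d : X -> X -> R) (hd : is_metric d) :
  (exists (alpha : R), 0 < alpha < 1 /\
     exists (N : NormedSpace), finite_dimensional N /\
       exists f : X -> N,
         forall x y : X,
           ns_norm N (ns_add N (f x) (ns_opp N (f y))) = rpow_nonneg (d x y) alpha)
  <-> finite_type X.
Proof.
  split; [|apply finite_embeds; auto].
  intros (alpha & Ha & N & HN & f & Hf). apply NNPP; intro Hfin.
  destruct (inf_seq X Hfin) as [xs Hxs].
  destruct (fd_coords N HN) as (n & nu & coord & Htri & Hhom & Hge0 & [K [HK HKb]] & Hdef & Hnorm).
  destruct hd as (Hd0 & Hd1 & Hd2 & Hd3).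
  set (Y := fun k => coord (f (xs k))).
  assert (HD : forall a b, D nu (Y a) (Y b) = rpow_nonneg (d (xs a) (xs b)) alpha).
  { intros a b. unfold D, Y. rewrite <- Hf, Hnorm. reflexivity. }
  assert (Hp : 1 < / alpha).
  { rewrite <- Rinv_1. apply Rinv_lt_contravar; lra. }
  apply (infinite_contra n nu K Htri Hhom Hge0 HK HKb Hdef (/ alpha) Hp Y).
  - intros a b Hab. rewrite HD. unfold rpow_nonneg. destruct (Rle_dec (d (xs a) (xs b)) 0).
    + exfalso. apply (Hxs a b Hab). apply Hd1. specialize (Hd0 (xs a) (xs b)). lra.
    + apply Rpower_pos'.
  - intros a b c. rewrite !HD, !G_rpow by (auto; lra). apply Hd3.
Qed.
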